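(* There exists a $4\times 4$ magic square $A$ whose sixteen entries are pairwise distinct strings of length $4$ over $\{0,1,2\}$ (read as decimal numbers, leading zeros allowed), with magic sum $S1=4444$, such that the rotated array $R(A)$ is also a magic square with magic sum $4444$.
   Context: A magic square of order $n$ is an $n\times n$ array of numbers in which the sums of the entries of each row, of each column and of each of the two principal diagonals all equal a common value $S1$ (the magic sum). For an $n\times n$ array $A$ whose entries are digit strings $d_1d_2\cdots d_k$ over $\{0,1,2\}$, the $180^\circ$-rotated array $R(A)$ is defined by $R(A)_{i,j}=\overline{A_{n+1-i,\,n+1-j}}$, where $\overline{d_1\cdots d_k}=d_k\cdots d_1$ is the reversed string. Strings are interpreted as decimal integers. *)

(* Defs.v *)
From mathcomp Require Import all_boot.
Set Implicit Arguments. Unset Strict Implicit. Unset Printing Implicit Defensive.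

(* A digit string of length k over {0,1,2}: positions 0..k-1 (d_1 is position 0). *)
Definition dstring (k : nat) := {ffun 'I_k -> 'I_3}.

Definition dval (k : nat) (s : dstring k) : nat :=
  \sum_(i < k) (s i : nat) * 10 ^ (k.-1 - i).

Definition drev (k : nat) (s : dstring k) : dstring k :=
  [ffun i => s (rev_ord i)].

Definition array (n : nat) (T : Type) := 'I_n -> 'I_n -> T.

Definition is_magic (n : nat) (M : array n nat) (S : nat) : Prop :=
  (forall i : 'I_n, \sum_(j < n) M i j = S) /\
  (forall j : 'I_n, \sum_(i < n) M i j = S) /\
  (\sum_(i < n) M i i = S) /\
  (\sum_(i < n) M i (rev_ord i) = S).

Definition val_array (n k : nat) (A : array n (dstring k)) : array n nat :=
  fun i j => dval (A i j).

Definition rot180 (n k : nat) (A : array n (dstring k)) : array n (dstring k) :=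
  fun i j => drev (A (rev_ord i) (rev_ord j)).

(* Main.v *)
Require Import Defs.
From mathcomp Require Import all_boot.

Definition tbl : seq (seq (seq nat)) :=
 [:: [:: [::2;0;1;0]; [::1;1;0;2]; [::0;1;1;0]; [::1;2;2;2]];
     [:: [::1;2;2;0]; [::0;1;2;2]; [::2;1;0;0]; [::1;0;0;2]];
     [:: [::1;2;0;2]; [::1;1;1;0]; [::1;1;1;2]; [::1;0;2;0]];
     [:: [::0;0;1;2]; [::2;1;1;0]; [::1;1;2;2]; [::1;2;0;0]]].

Definition Aw : array 4 (dstring 4) :=
  fun i j => [ffun k : 'I_4 => inord (nth 0 (nth [::] (nth [::] tbl i) j) k)].

Definition num (i j : nat) : nat :=
  let s := nth [::] (nth [::] tbl i) j in
  nth 0 s 0 * 1000 + nth 0 s 1 * 100 + nth 0 s 2 * 10 + nth 0 s 3.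
Definition rnum (i j : nat) : nat :=
  let s := nth [::] (nth [::] tbl (3 - i)) (3 - j) in
  nth 0 s 3 * 1000 + nth 0 s 2 * 100 + nth 0 s 1 * 10 + nth 0 s 0.

Definition o0 : 'I_4 := @Ordinal 4 0 isT.
Definition o1 : 'I_4 := @Ordinal 4 1 isT.
Definition o2 : 'I_4 := @Ordinal 4 2 isT.
Definition o3 : 'I_4 := @Ordinal 4 3 isT.
Lemma sum4 (F : 'I_4 -> nat) : \sum_(i < 4) F i = F o0 + F o1 + F o2 + F o3.
Proof. by rewrite !big_ord_recr big_ord0 /=; congr (_+_+_+_+_); apply: congr1; apply/val_inj. Qed.

Lemma ord4 (i : 'I_4) : i = o0 \/ i = o1 \/ i = o2 \/ i = o3.
Proof.
case: i => [[|[|[|[|m]]]] H].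
- by left; apply/val_inj.
- by right; left; apply/val_inj.
- by right; right; left; apply/val_inj.
- by right; right; right; apply/val_inj.
- by [].
Qed.

Lemma valA (i j : 'I_4) : val_array Aw i j = num i j.
Proof.
rewrite /val_array /dval sum4 /Aw !ffunE /num.
have H : forall k : nat, k < 4 -> (nth 0 (nth [::] (nth [::] tbl i) j) k) < 3.
  by case: (ord4 i) => [->|[->|[->|->]]]; case: (ord4 j) => [->|[->|[->|->]]];
     do 4? case=> //.
by rewrite !inordK ?H //= muln1.
Qed.

Lemma valR (i j : 'I_4) : val_array (rot180 Aw) i j = rnum i j.
Proof.
rewrite /val_array /rot180 /dval sum4 /drev /Aw !ffunE /rnum /=.
have H : forall k : nat, k < 4 -> (nth 0 (nth [::] (nth [::] tbl (3 - i)) (3 - j)) k) < 3.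
  by case: (ord4 i) => [->|[->|[->|->]]]; case: (ord4 j) => [->|[->|[->|->]]];
     do 4? case=> //.
by rewrite !inordK ?H //= muln1.
Qed.

Definition key (i j : 'I_4) : nat := num i j.

Lemma magic_of (M : array 4 nat) (f : nat -> nat -> nat) :
  (forall i j : 'I_4, M i j = f i j) ->
  [&& f 0 0 + f 0 1 + f 0 2 + f 0 3 == 4444,
      f 1 0 + f 1 1 + f 1 2 + f 1 3 == 4444,
      f 2 0 + f 2 1 + f 2 2 + f 2 3 == 4444,
      f 3 0 + f 3 1 + f 3 2 + f 3 3 == 4444,
      f 0 0 + f 1 0 + f 2 0 + f 3 0 == 4444,
      f 0 1 + f 1 1 + f 2 1 + f 3 1 == 4444,
      f 0 2 + f 1 2 + f 2 2 + f 3 2 == 4444,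
      f 0 3 + f 1 3 + f 2 3 + f 3 3 == 4444,
      f 0 0 + f 1 1 + f 2 2 + f 3 3 == 4444 &
      f 0 3 + f 1 2 + f 2 1 + f 3 0 == 4444] -> is_magic M 4444.
Proof.
move=> HM /andP[/eqP r0 /andP[/eqP r1 /andP[/eqP r2 /andP[/eqP r3 /andP[/eqP c0 /andP[/eqP c1 /andP[/eqP c2 /andP[/eqP c3 /andP[/eqP d1 /eqP d2]]]]]]]]].
split; [|split; [|split]].
- move=> i; rewrite sum4 !HM.
  by case: (ord4 i) => [->|[->|[->|->]]].
- move=> j; rewrite sum4 !HM.
  by case: (ord4 j) => [->|[->|[->|->]]].
- by rewrite sum4 !HM.
- by rewrite sum4 !HM.
Qed.

Theorem mainTheorem2 :
  exists A : array 4 (dstring 4),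
    (forall i j i' j' : 'I_4, A i j = A i' j' -> i = i' /\ j = j') /\
    is_magic (val_array A) 4444 /\
    is_magic (val_array (rot180 A)) 4444.
Proof.
exists Aw; split; [|split; [apply: (@magic_of _ num valA)|apply: (@magic_of _ rnum valR)]]; try by [].
move=> i j i' j' E.
have : num i j = num i' j' by rewrite -!valA /val_array E.
by case: (ord4 i) => [->|[->|[->|->]]]; case: (ord4 j) => [->|[->|[->|->]]];
   case: (ord4 i') => [->|[->|[->|->]]]; case: (ord4 j') => [->|[->|[->|->]]].
Qed.
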